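(* Let $n\ge2$ and $Q\in SU_n$ with eigenvalues $\mu_1,\dots,\mu_n$ (with multiplicity) ordered so that $\arg(\mu_1)\le\cdots\le\arg(\mu_n)$, and let $\zeta(Q):=\frac1{2\pi}\sum_{j=1}^n\arg(\mu_j)\in\mathbb{Z}$. Let $W_Q:=\{\underline{k}=(k_1,\dots,k_n)\in\mathbb{Z}^n:\sum_{j=1}^nk_j=-\zeta(Q)\}$, $\psi_Q:W_Q\to\mathbb{R}$, $\psi_Q(\underline{k})=\sum_{j=1}^n(\arg(\mu_j)+2k_j\pi)^2$, $\Delta_Q(\underline{k}):=\max\{k_1,\dots,k_n\}-\min\{k_1,\dots,k_n\}$, $Z_Q:=\{\underline{k}\in W_Q:\Delta_Q(\underline{k})\le1\}$, and $m(Q):=\min\{\psi_Q(\underline{k}):\underline{k}\in W_Q\}$. Then $\psi_Q(\underline{k})>m(Q)$ for every $\underline{k}\in W_Q\setminus Z_Q$; consequently $m(Q)=\min\{\psi_Q(\underline{k}):\underline{k}\in Z_Q\}$.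
   Context: $SU_n$ is the special unitary group and $\arg(z)\in(-\pi,\pi]$ the principal argument. (The quantity $m(Q)$ coincides with $\min\{\mathrm{tr}(XX^* ):X\in\mathfrak{su}_n,\ \exp(X)=Q\}$.) *)

(* Defs.v *)
From mathcomp Require Import all_boot all_order all_algebra.
From mathcomp Require Import complex.
From mathcomp Require Import reals trigo.
Set Implicit Arguments. Unset Strict Implicit. Unset Printing Implicit Defensive.
Import Order.TTheory GRing.Theory Num.Theory.
Local Open Scope ring_scope.

(* Principal argument arg z in (-pi, pi]; arg 0 := 0 (irrelevant here since
   eigenvalues of a unitary matrix are nonzero). *)
Definition carg (R : realType) (z : R[i]) : R :=
  let a := complex.Re z in
  let b := complex.Im z in
  let r := Num.sqrt (a ^+ 2 + b ^+ 2) in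
  if r == 0 then 0
  else if 0 <= b then acos (a / r) else - acos (a / r).

Definition is_SU (R : realType) (n : nat) (Q : 'M[R[i]]_n) : Prop :=
  Q *m (map_mx (fun z => z^*) Q)^T = 1%:M /\ \det Q = 1.

Definition eigen_list (R : realType) (n : nat) (Q : 'M[R[i]]_n)
  (mu : 'I_n -> R[i]) : Prop :=
  char_poly Q = \prod_(j < n) ('X - (mu j)%:P).

Definition zetaQ (R : realType) (n : nat) (mu : 'I_n -> R[i]) : R :=
  (\sum_(j < n) carg (mu j)) / (2 * pi).

Definition W_Q (R : realType) (n : nat) (mu : 'I_n -> R[i])
  (k : 'I_n -> int) : Prop :=
  ((\sum_(j < n) k j)%:~R : R) = - zetaQ mu.

Definition psi_Q (R : realType) (n : nat) (mu : 'I_n -> R[i])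
  (k : 'I_n -> int) : R :=
  \sum_(j < n) (carg (mu j) + 2 * (k j)%:~R * pi) ^+ 2.

Definition Delta_Q (n : nat) (k : 'I_n -> int) : int :=
  let s := [seq k i | i <- enum 'I_n] in
  \big[Num.max/head 0 s]_(x <- s) x - \big[Num.min/head 0 s]_(x <- s) x.

Definition Z_Q (R : realType) (n : nat) (mu : 'I_n -> R[i])
  (k : 'I_n -> int) : Prop :=
  W_Q mu k /\ Delta_Q k <= 1.

Definition is_min_on (R : realType) (n : nat) (P : ('I_n -> int) -> Prop)
  (f : ('I_n -> int) -> R) (m : R) : Prop :=
  (exists k, P k /\ f k = m) /\ (forall k, P k -> m <= f k).

(* Main.v *)
Require Import Defs.
From mathcomp Require Import all_boot all_order all_algebra.
From mathcomp Require Import complex.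
From mathcomp Require Import reals trigo.
From mathcomp Require Import ring lra zify.
Import Order.TTheory GRing.Theory Num.Theory.
Local Open Scope ring_scope.

Section S.
Variable R : realType.

Definition cr (z : R[i]) : R := Num.sqrt (complex.Re z ^+ 2 + complex.Im z ^+ 2).

Lemma carg_polar (z : R[i]) :
  complex.Re z = cr z * cos (carg z) /\ complex.Im z = cr z * sin (carg z).
Proof.
rewrite /carg /cr; set a := complex.Re z; set b := complex.Im z.
set r := Num.sqrt _.
have r0 : 0 <= r by apply: sqrtr_ge0.
have rr : r ^+ 2 = a ^+ 2 + b ^+ 2 by rewrite sqr_sqrtr // addr_ge0 // sqr_ge0.
case: eqP => [e|/eqP rn0].
  rewrite e !mul0r; rewrite e expr0n /= in rr.
  have a2 : a ^+ 2 = 0 by apply/eqP; rewrite eq_le sqr_ge0 andbT; nra.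
  have b2 : b ^+ 2 = 0 by apply/eqP; rewrite eq_le sqr_ge0 andbT; nra.
  by move/eqP: a2; rewrite sqrf_eq0 => /eqP ->; move/eqP: b2; rewrite sqrf_eq0 => /eqP ->.
have rp : 0 < r by rewrite lt_def rn0.
have ha : -1 <= a / r <= 1.
  rewrite ler_pdivlMr // ler_pdivrMr //; apply/andP; split; nra.
have hc : cos (acos (a / r)) = a / r by rewrite acosK // in_itv /=.
have hs : sin (acos (a / r)) = `|b| / r.
  rewrite sin_acos // -[`|b| / r]ger0_norm ?divr_ge0 // -sqrtr_sqr; congr Num.sqrt.
  have nb : `|b| ^+ 2 = b ^+ 2 by rewrite -normrX ger0_norm ?sqr_ge0.
  have r2 : r ^+ 2 != 0 by rewrite sqrf_eq0.
  rewrite !expr_div_n nb -{1}(divff r2) rr; field; by rewrite -rr.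
case: ifPn => hb.
  rewrite hc hs ger0_norm //; split; field; apply/eqP; lra.
rewrite cosN sinN hc hs ltr0_norm ?ltNge ?hb //; split; field; apply/eqP; lra.
Qed.

Lemma carg_bound (z : R[i]) : - pi < carg z <= pi.
Proof.
rewrite /carg; set a := complex.Re z; set b := complex.Im z.
set r := Num.sqrt _.
have r0 : 0 <= r by apply: sqrtr_ge0.
have rr : r ^+ 2 = a ^+ 2 + b ^+ 2 by rewrite sqr_sqrtr // addr_ge0 // sqr_ge0.
have pp := pi_gt0 R.
case: eqP => [_|/eqP rn0]; first by lra.
have rp : 0 < r by rewrite lt_def rn0.
have ha : -1 <= a / r <= 1.
  rewrite ler_pdivlMr // ler_pdivrMr //; apply/andP; split; nra.
have h0 := acos_ge0 ha; have h1 := acos_lepi ha.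
case: ifPn => hb; first by lra.
suff : acos (a / r) != pi by rewrite lt_neqAle => ne; apply/andP; split; lra.
apply/negP => /eqP e.
have : cos (acos (a / r)) = a / r by rewrite acosK // in_itv /=.
rewrite e cospi => /eqP; rewrite eq_sym (can2_eq (divfK _) (mulfK _)) ?rn0 // => /eqP ea.
rewrite -ltNge in hb; nra.
Qed.

Lemma prod_polar (I : Type) (l : seq I) (f : I -> R[i]) :
  complex.Re (\prod_(j <- l) f j) = (\prod_(j <- l) cr (f j)) * cos (\sum_(j <- l) carg (f j)) /\
  complex.Im (\prod_(j <- l) f j) = (\prod_(j <- l) cr (f j)) * sin (\sum_(j <- l) carg (f j)).
Proof.
elim: l => [|x l [IH1 IH2]].
  by rewrite !big_nil cos0 sin0 /=; split; rewrite ?mulr1 ?mulr0.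
rewrite !big_cons cosD sinD.
have [p1 p2] := carg_polar (f x).
have hM : forall u v : R[i], complex.Re (u * v) = complex.Re u * complex.Re v - complex.Im u * complex.Im v
   /\ complex.Im (u * v) = complex.Re u * complex.Im v + complex.Im u * complex.Re v.
  by case=> a b [c d].
have [-> ->] := hM (f x) (\prod_(j <- l) f j).
rewrite p1 p2 IH1 IH2; split; ring.
Qed.

Lemma cos_nat_period (y : R) (m : nat) : cos (y + 2 * pi * m%:R) = cos y.
Proof.
elim: m => [|m IH]; first by rewrite mulr0 addr0.
have -> : y + 2 * pi * m.+1%:R = (y + 2 * pi * m%:R) + pi *+ 2.
  by rewrite -natr1 mulr2n; ring.
by rewrite cosD2pi.
Qed.

Lemma cos_int_period (y : R) (N : int) : cos (y + 2 * pi * N%:~R) = cos y.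
Proof.
case: N => m; first exact: cos_nat_period.
rewrite NegzE; have := cos_nat_period (y + 2 * pi * (- (m.+1%:Z))%:~R) m.+1.
move=> <-; congr cos; rewrite intrN; ring.
Qed.

Lemma cos_eq1 (x : R) : cos x = 1 -> exists N : int, x = 2 * pi * N%:~R.
Proof.
move=> hx.
have pp := pi_gt0 R.
have p2 : 0 < 2 * (pi : R) by lra.
set N := Num.floor (x / (2 * pi)).
exists N.
have h1 := floor_le (x / (2 * pi)); have h2 := floorD1_gt (x / (2 * pi)).
rewrite -/N in h1 h2; rewrite intrD in h2.
set r := x - 2 * pi * N%:~R.
move: h1 h2; rewrite ler_pdivlMr // ltr_pdivrMr // => h1 h2.
have r0 : 0 <= r by rewrite /r; lra.
have r1 : r < 2 * pi by rewrite /r; lra.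
have cr1 : cos r = 1.
  by rewrite -hx -(cos_int_period r N) /r subrK.
suff : r = 0 by rewrite /r => /eqP; rewrite subr_eq0 => /eqP.
have [rle|rgt] := lerP r pi.
  apply: (@cos_inj R); rewrite ?in_itv /= ?r0 ?rle ?lexx //; first by lra.
  by rewrite cr1 cos0.
have : 2 * pi - r = 0.
  apply: (@cos_inj R); rewrite ?in_itv /= ?lexx; [apply/andP; split; lra| by lra|].
  have -> : 2 * pi - r = - r + 2 * pi * (1%:Z)%:~R by rewrite mulr1 addrC.
  by rewrite cos_int_period cosN cr1 cos0.
lra.
Qed.

Lemma zeta_int (n : nat) (Q : 'M[R[i]]_n) (mu : 'I_n -> R[i]) :
  is_SU Q -> eigen_list Q mu -> exists N : int, zetaQ mu = N%:~R.
Proof.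
move=> [_ hdet]; rewrite /eigen_list => hE.
have hp : \prod_(j < n) mu j = 1.
  have := congr1 (fun p => p.[0]) hE; rewrite /= horner_coef0 char_poly_det hdet mulr1.
  rewrite horner_prod.
  under eq_bigr do rewrite hornerXsubC sub0r.
  rewrite prodrN card_ord => /esym/eqP; rewrite -{2}[(-1) ^+ n]mulr1.
  by rewrite (inj_eq (mulfI _)) ?signr_eq0 // => /eqP.
have [h1 h2] := prod_polar _ (index_enum 'I_n) mu.
rewrite hp /= in h1 h2.
set P := \prod_(j <- index_enum 'I_n) cr (mu j) in h1 h2.
set S := \sum_(j <- index_enum 'I_n) carg (mu j) in h1 h2.
have P0 : 0 <= P by apply: prodr_ge0 => j _; apply: sqrtr_ge0.
have cs := cos2Dsin2 S.
have sS : sin S = 0.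
  have Pn : P != 0 by apply/eqP => e; rewrite e mul0r in h1; move: h1; apply/eqP; rewrite oner_eq0.
  by apply/eqP; move: h2 => /esym/eqP; rewrite mulf_eq0 (negbTE Pn).
have cS : cos S = 1 by rewrite sS in cs; nra.
have [N hN] := cos_eq1 _ cS.
exists N; rewrite /zetaQ -/S hN mulrC mulrA mulVf ?mul1r //.
by apply/eqP => e; have := pi_gt0 R; lra.
Qed.

Lemma bigmax_spec (s : seq int) (x0 : int) :
  let M := \big[Num.max/x0]_(x <- s) x in
  x0 <= M /\ (forall x, x \in s -> x <= M) /\ (M = x0 \/ M \in s).
Proof.
elim: s => [|y s [IH1 [IH2 IH3]]] /=; first by rewrite big_nil; split => //; split => //; left.
rewrite big_cons; set M := \big[_/_]_(x <- s) x in IH1 IH2 IH3 *.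
have [h|h] := lerP y M.
  split => //; split.
    by move=> x; rewrite inE => /orP [/eqP ->|/IH2].
  by case: IH3 => [->|hh]; [left|right; rewrite inE hh orbT].
split; first by apply: le_trans (ltW h).
split; last by right; rewrite inE eqxx.
move=> x; rewrite inE => /orP [/eqP ->//|/IH2 hx]; exact: le_trans (ltW h).
Qed.

Lemma bigmin_spec (s : seq int) (x0 : int) :
  let M := \big[Num.min/x0]_(x <- s) x in
  M <= x0 /\ (forall x, x \in s -> M <= x) /\ (M = x0 \/ M \in s).
Proof.
elim: s => [|y s [IH1 [IH2 IH3]]] /=; first by rewrite big_nil; split => //; split => //; left.
rewrite big_cons; set M := \big[_/_]_(x <- s) x in IH1 IH2 IH3 *.
have [h|h] := lerP y M.
  split; first by apply: le_trans h IH1.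
  split; last by right; rewrite inE eqxx.
  move=> x; rewrite inE => /orP [/eqP ->//|/IH2 hx]; exact: le_trans hx.
split => //; split.
  by move=> x; rewrite inE => /orP [/eqP ->|/IH2] //; rewrite ltW.
by case: IH3 => [->|hh]; [left|right; rewrite inE hh orbT].
Qed.

Lemma Delta_le1 (n : nat) (k : 'I_n -> int) : (0 < n)%N ->
  (Delta_Q k <= 1) <-> (forall i j, k i - k j <= 1).
Proof.
move=> n0; rewrite /Delta_Q; set s := [seq k i | i <- enum 'I_n].
have hs : forall x, x \in s -> exists i, x = k i by move=> x /mapP [i _ ->]; exists i.
have ks : forall i, k i \in s by move=> i; apply: map_f; rewrite mem_enum.
have h0 : head 0 s \in s.
  by rewrite /s (enumT 'I_n) -enumT; case E: (enum 'I_n) => [|x t] /=;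
   [move: (ks (Ordinal n0)); rewrite /s E | rewrite inE eqxx].
have [M1 [M2 M3]] := bigmax_spec s (head 0 s).
have [m1 [m2 m3]] := bigmin_spec s (head 0 s).
set M := \big[_/_]_(x <- s) x in M1 M2 M3 *.
set m := \big[_/_]_(x <- s) x in m1 m2 m3 *.
have [i Mi] : exists i, M = k i by apply: hs; case: M3 => [->|].
have [j mj] : exists j, m = k j by apply: hs; case: m3 => [->|].
split.
  move=> hd a b; have := M2 _ (ks a); have := m2 _ (ks b); lia.
by move=> h; rewrite Mi mj.
Qed.

Lemma sum2 (V : zmodType) (n : nat) (g : 'I_n -> V) (a b : 'I_n) : a != b ->
  (forall j, j != a -> j != b -> g j = 0) -> \sum_j g j = g a + g b.
Proof.
move=> ab hg; rewrite (bigD1 a) //= (bigD1 b) 1?eq_sym //= big1 ?addr0 ?addrA //.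
by move=> j /andP [ja jb]; apply: hg.
Qed.

Section Comb.
Variables (n : nat) (mu : 'I_n -> R[i]) (s : int).

Definition Wi (k : 'I_n -> int) := \sum_j k j = s.
Definition Pw (k : 'I_n -> int) := forall i j, k i - k j <= 1.
Definition meas (k : 'I_n -> int) : int := \sum_j k j ^+ 2.

Definition mv (k : 'I_n -> int) (a b : 'I_n) : 'I_n -> int :=
  fun j => k j - (j == a)%:R + (j == b)%:R.

Lemma mv_spec k a b : 2 <= k a - k b ->
  (Wi k -> Wi (mv k a b)) /\ psi_Q mu (mv k a b) < psi_Q mu k /\
  meas (mv k a b) <= meas k - 2.
Proof.
move=> hab.
have ab : a != b by apply/eqP => e; move: hab; rewrite e subrr.
have ba : b != a by rewrite eq_sym.
have mva : mv k a b a = k a - 1 by rewrite /mv eqxx (negbTE ab) addr0.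
have mvb : mv k a b b = k b + 1 by rewrite /mv eqxx (negbTE ba) subr0.
have mvo : forall j, j != a -> j != b -> mv k a b j = k j.
  by move=> j ja jb; rewrite /mv (negbTE ja) (negbTE jb) subr0 addr0.
split.
  rewrite /Wi => <-; apply/eqP; rewrite -subr_eq0 -sumrB.
  rewrite (@sum2 _ _ (fun j => mv k a b j - k j) _ _ ab); last by move=> j ja jb; rewrite mvo ?subrr.
  by rewrite mva mvb; apply/eqP; ring.
split.
  rewrite -subr_lt0 /psi_Q -sumrB.
  rewrite (@sum2 _ _ _ _ _ ab); last by move=> j ja jb /=; rewrite mvo ?subrr.
  rewrite mva mvb !intrD.
  have /andP [l1 l2] := carg_bound (mu a); have /andP [l3 l4] := carg_bound (mu b).
  have pp := pi_gt0 R.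
  have hab' : 2 <= (k a)%:~R - (k b)%:~R :> R.
    by move: hab; rewrite -(ler_int R) intrB.

  set x := carg (mu a); set y := carg (mu b).
  set u := (k a)%:~R : R; set v := (k b)%:~R : R.
  have e : (x + 2 * (u + (-1)%:~R) * pi) ^+ 2 - (x + 2 * u * pi) ^+ 2 +
    ((y + 2 * (v + 1%:~R) * pi) ^+ 2 - (y + 2 * v * pi) ^+ 2) =
    4 * pi * (y - x + 2 * pi * (v - u) + 2 * pi) by rewrite /=; ring.
  rewrite e pmulr_rlt0; last by lra.
  have h0 : 0 <= u - v - 2 by lra.
  have := mulr_ge0 (ltW pp) h0.
  move: l1 l2 l3 l4 hab'; rewrite -/x -/y -/u -/v; lra.
have : meas (mv k a b) - meas k = (k a - 1) ^+ 2 - k a ^+ 2 + ((k b + 1) ^+ 2 - k b ^+ 2).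
  rewrite /meas -sumrB (@sum2 _ _ _ _ _ ab); last by move=> j ja jb /=; rewrite mvo ?subrr.
  by rewrite mva mvb.
move: hab; rewrite !expr2; lia.
Qed.

Lemma meas_ge0 k : 0 <= meas k.
Proof. by apply: sumr_ge0 => j _; apply: sqr_ge0. Qed.

Lemma pw_dec k : Pw k \/ exists a b, 2 <= k a - k b.
Proof.
case: (boolP [forall i, [forall j, k i - k j <= 1]]) => hp.
  by left => i j; move/forallP: hp => /(_ i) /forallP /(_ j).
move/forallPn: hp => [a /forallPn [b hb]]; right; exists a, b.
by move: hb; rewrite -ltNge; lia.
Qed.

Lemma descent (N : nat) : forall k, meas k <= N%:Z -> Wi k ->
  exists k', Wi k' /\ Pw k' /\ psi_Q mu k' <= psi_Q mu k /\
    (~ Pw k -> psi_Q mu k' < psi_Q mu k).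
Proof.
elim: N => [|N IH] k hm hw; (case: (pw_dec k) => [pk|[a [b hab]]];
  [ by exists k; split => //; split => //; split => // |
    have [w' [lt me]] := mv_spec k a b hab; have mg := meas_ge0 (mv k a b) ]).
- lia.
- have [k'' [w'' [p'' [le'' _]]]] := IH (mv k a b) ltac:(lia) (w' hw).
  exists k''; split => //; split => //; split => [|_]; first exact: (le_trans le'' (ltW lt)).
  exact: le_lt_trans le'' lt.
Qed.

Lemma exmin (k : 'I_n -> int) (i0 : 'I_n) : exists i, forall j, k i <= k j.
Proof. by case: (@arg_minP _ _ _ i0 xpredT k isT) => i _ h; exists i => j; apply: h. Qed.

Lemma sum_const_int (c : int) : \sum_(j < n) c = c * n%:R.
Proof. by rewrite sumr_const card_ord mulr_natr. Qed.

Lemma bounds kk i : (forall j, kk i <= kk j) -> Pw kk ->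
  kk i * n%:R <= \sum_j kk j /\ \sum_j kk j <= (kk i + 1) * n%:R - 1.
Proof.
move=> hmin hp; split.
  by rewrite -sum_const_int; apply: ler_sum => j _; apply: hmin.
rewrite -sum_const_int lerBrDr addrC -lerBrDr.
rewrite -sumrB (bigD1 i) //=.
have -> : kk i + 1 - kk i = 1 by ring.
rewrite lerDl; apply: sumr_ge0 => j _; have := hp j i; lia.
Qed.

Lemma c_unique (n0 : (0 < n)%N) k1 i1 k2 i2 :
  (forall j, k1 i1 <= k1 j) -> Pw k1 -> (forall j, k2 i2 <= k2 j) -> Pw k2 ->
  \sum_j k1 j = \sum_j k2 j -> k1 i1 = k2 i2.
Proof.
move=> m1 p1 m2 p2 e.
have [b1 b2] := bounds _ _ m1 p1; have [b3 b4] := bounds _ _ m2 p2.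
rewrite e in b1 b2.
have nN : 1 <= (n%:R : int) by rewrite ler1n.
move: b1 b2 b3 b4 nN; set N := (n%:R : int); set S := \sum_j k2 j.
set x := k1 i1; set y := k2 i2; nia.
Qed.

Lemma comb (n0 : (0 < n)%N) k0 : Wi k0 ->
  exists m, (exists k, Wi k /\ Pw k /\ psi_Q mu k = m) /\
            (forall k, Wi k -> Pw k -> m <= psi_Q mu k).
Proof.
move=> w0.
have [kz [wz [pz _]]] := @descent `|meas k0|%N k0 ltac:(by rewrite abszE ger0_norm ?meas_ge0) w0.
set i0 := Ordinal n0.
have [i1 h1] := exmin kz i0.
set c := kz i1.
pose kb (b : {ffun 'I_n -> bool}) := fun j => if b j then c + 1 else c.
pose Pb (b : {ffun 'I_n -> bool}) := (\sum_j kb b j == s).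
have key : forall k, Wi k -> Pw k -> exists b, Pb b /\ (forall j, k j = kb b j).
  move=> k wk pk; have [i2 h2] := exmin k i0.
  have ec : k i2 = c by apply: c_unique => //; rewrite wk wz.
  exists [ffun j => k j != c].
  have hj : forall j, k j = kb [ffun j => k j != c] j.
    move=> j; rewrite /kb ffunE; case: eqP => [->//|ne].
    have := h2 j; have := pk j i2; move: ne; rewrite ec /=; lia.
  split => //; rewrite /Pb; apply/eqP; rewrite -wk; apply: eq_bigr => j _; by rewrite hj.
have [b0 [pb0 _]] := key kz wz pz.
case: (arg_minP (fun b => psi_Q mu (kb b)) pb0) => bs pbs hmin.
exists (psi_Q mu (kb bs)); split.
  exists (kb bs); split; first by apply/eqP.
  by split => // i j; rewrite /kb; case: ifP; case: ifP => _ _; lia.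
move=> k wk pk; have [b [pb hb]] := key k wk pk.
have -> : psi_Q mu k = psi_Q mu (kb b) by apply: eq_bigr => j _; rewrite hb.
exact: hmin.
Qed.
End Comb.
End S.

Theorem lemma2p6 (R : realType) (n : nat) (Q : 'M[R[i]]_n)
  (mu : 'I_n -> R[i]) :
  (2 <= n)%N ->
  is_SU Q ->
  eigen_list Q mu ->
  (forall i j : 'I_n, (i <= j)%N -> carg (mu i) <= carg (mu j)) ->
  exists m : R,
  is_min_on (W_Q mu) (psi_Q mu) m /\
  (forall k, W_Q mu k -> ~ Z_Q mu k -> psi_Q mu k > m) /\
  is_min_on (Z_Q mu) (psi_Q mu) m.
Proof.
move=> n2 hSU hE _.
have n0 : (0 < n)%N by apply: leq_trans n2.
have [N hN] := @zeta_int R n Q mu hSU hE.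
set s := - N.
have hW : forall k, W_Q mu k <-> Wi _ s k.
  move=> k; rewrite /W_Q /Wi hN -intrN; split; first by move/eqP; rewrite eqr_int => /eqP.
  by move=> ->.
have hZ : forall k, Z_Q mu k <-> Wi _ s k /\ Pw _ k.
  move=> k; rewrite /Z_Q hW Delta_le1 //.
set i0 := Ordinal n0.
pose k0 := fun j : 'I_n => if j == i0 then s else 0.
have w0 : Wi _ s k0.
  rewrite /Wi (bigD1 i0) //= /k0 eqxx big1 ?addr0 // => j /negbTE ->.
  done.
have [m [[km [wkm [pkm em]]] hm]] := @comb R n mu s n0 k0 w0.
have desc : forall k, Wi _ s k -> exists k', Wi _ s k' /\ Pw _ k' /\ psi_Q mu k' <= psi_Q mu k /\
    (~ Pw _ k -> psi_Q mu k' < psi_Q mu k).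
  move=> k wk; apply: (@descent R n mu s `|meas _ k|%N k) => //.
  by rewrite abszE ger0_norm ?meas_ge0.
exists m; split; [|split].
- split; first by exists km; split => //; apply/hW.
  move=> k /hW wk; have [k' [w' [p' [le' _]]]] := desc k wk.
  exact: le_trans (hm k' w' p') le'.
- move=> k /hW wk nz; have [k' [w' [p' [_ lt']]]] := desc k wk.
  apply: le_lt_trans (hm k' w' p') (lt' _) => pk; apply: nz; exact: (proj2 (hZ k) (conj wk pk)).
- split; first by exists km; split => //; exact: (proj2 (hZ km) (conj wkm pkm)).
  by move=> k /hZ [wk pk]; apply: hm.
Qed.
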